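(* Assume the setting in the context. For an integer $r\ge1$, if the $r$th central moment of $\hat\theta_i(z,\omega)$ exists, then \[ \mathbb E\bigl|\hat\theta_i(z,\omega)-\theta_i(\tilde y_i)\bigr|^r\le\bigl(2\|\tilde y_i\|_p\|\psi_i\|_q\bigr)^r \] for any $p,q\in[1,\infty]$ with $1/p+1/q=1/r$. In particular, for $r=2$, \[ \mathbb E\bigl[\hat\theta_i(z,\omega)-\theta_i(\tilde y_i)\bigr]^2\le\|\tilde y_i\|_p^2\|\psi_i\|_q^2 \] for any $p,q\in[1,\infty]$ with $1/p+1/q=1/2$. (These inequalities hold trivially if $\|\tilde y_i\|_p$ or $\|\psi_i\|_q$ is infinite.)
   Context: Let $(\Omega,\mathcal F,P)$ be a probability space (latent environment) and $\mathcal Z$ a measurable space of treatment assignments with a known randomisation probability measure $\mu$. The potential outcome of unit $i$ is a measurable map $\tilde y_i:\mathcal Z\times\Omega\to\mathbb R$ of the form $\tilde y_i(z,\omega)=y_i(z,x_i(\omega),\epsilon_i(\omega))$ with $y_i,x_i,\epsilon_i$ measurable. For $p\ge1$, $\|u\|_p=(\int|u(z,\omega)|^p\mu(\mathrm dz)P(\mathrm d\omega))^{1/p}$ (with the essential supremum for $p=\infty$); $\mathbb E$ denotes expectation with respect to $\mu(\mathrm dz)P(\mathrm d\omega)$. $\tilde y_i$ lies in a model space $\mathcal M_i\subset L^2(\mathcal Z\times\Omega)$ (taken closed) with inner product $\langle u,v\rangle=\mathbb E[uv]$. The treatment effect $\theta_i$ is a continuous linear functional on $\mathcal M_i$ with Riesz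 representer $\psi_i\in\mathcal M_i$, i.e. $\theta_i(u)=\langle u,\psi_i\rangle$ for all $u\in\mathcal M_i$. The Riesz estimator is $\hat\theta_i(z,\omega)=\tilde y_i(z,\omega)\psi_i(z,\omega)$. *)

(* Defs.v *)
From HB Require Import structures.
From mathcomp Require Import all_boot all_order all_algebra.
From mathcomp Require Import all_classical all_reals all_analysis.
Set Implicit Arguments. Unset Strict Implicit. Unset Printing Implicit Defensive.
Import Order.TTheory GRing.Theory Num.Theory.
Import numFieldNormedType.Exports.
Local Open Scope classical_set_scope.
Local Open Scope ring_scope.

Section Defs.
Context d {T : measurableType d} {R : realType}.
Variable m : {measure set T -> \bar R}.

Definition square_integrable (f : T -> R) : Prop :=
  measurable_fun setT f /\ (Lnorm m 2%:E (EFin \o f) < +oo)%E.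

Definition L2dist (f g : T -> R) : \bar R := Lnorm m 2%:E (EFin \o (f \- g)).

Definition closed_L2_subspace (M : set (T -> R)) : Prop :=
  [/\ (forall f, M f -> square_integrable f),
      M (fun _ => 0),
      (forall (a : R) f g, M f -> M g -> M (fun t => a * f t + g t)) &
      (forall (u_ : nat -> T -> R) (u : T -> R),
          (forall n, M (u_ n)) -> square_integrable u ->
          (fun n => L2dist (u_ n) u) @ \oo --> 0%E -> M u)].

Definition continuous_linear_on (M : set (T -> R)) (theta : (T -> R) -> R) : Prop :=
  (forall (a : R) f g, M f -> M g ->
      theta (fun t => a * f t + g t) = a * theta f + theta g) /\
  (forall (u_ : nat -> T -> R) (u : T -> R),
      (forall n, M (u_ n)) -> M u ->
      (fun n => L2dist (u_ n) u) @ \oo --> 0%E ->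
      (fun n => theta (u_ n)) @ \oo --> theta u).

Definition riesz_representer (M : set (T -> R)) (theta : (T -> R) -> R)
    (psi : T -> R) : Prop :=
  M psi /\ forall u, M u -> (theta u)%:E = (\int[m]_t (u t * psi t)%:E)%E.

End Defs.

(* Main.v *)
Require Import Defs.
From HB Require Import structures.
From mathcomp Require Import all_boot all_order all_algebra.
From mathcomp Require Import all_classical all_reals all_analysis.
From mathcomp Require Import measurable_realfun ess_sup_inf.
From mathcomp Require Import ring.
Import Order.TTheory GRing.Theory Num.Theory.
Import numFieldNormedType.Exports.
Local Open Scope classical_set_scope.
Local Open Scope ring_scope.

Section aux.
Context {R : realType}.
Local Open Scope ereal_scope.

Lemma expe_poweR (x : \bar R) (n : nat) : 0 <= x -> x ^+ n = x `^ n%:R.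
Proof.
case: x => [r| |]// r0.
  by rewrite poweR_EFin powR_mulrn// EFin_expe.
case: n => [|n]; first by rewrite expe0 poweRe0.
rewrite poweRyr ?pnatr_eq0//.
elim: n => [|n IH]; first by rewrite expeS expe0 mule1.
by rewrite expeS IH mulyy.
Qed.

Lemma poweRK (x : \bar R) (r : R) : (0 < r)%R -> 0 <= x -> (x `^ r) `^ r^-1 = x.
Proof. by move=> r0 x0; rewrite -poweRrM mulfV ?gt_eqF// poweRe1. Qed.

Lemma poweR_le_inv (x y : \bar R) (r : R) : (0 < r)%R -> 0 <= x -> 0 <= y ->
  x `^ r <= y `^ r -> x <= y.
Proof.
move=> r0 x0 y0 h; rewrite -(poweRK _ _ r0 x0) -(poweRK _ _ r0 y0).
apply: gt0_ler_poweR => //; first by rewrite invr_ge0 ltW.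
- by rewrite in_itv /= poweR_ge0 leey.
- by rewrite in_itv /= poweR_ge0 leey.
Qed.

Lemma poweR_le (x y : \bar R) (r : R) : (0 <= r)%R -> 0 <= x -> x <= y ->
  x `^ r <= y `^ r.
Proof.
move=> r0 x0 xy; apply: gt0_ler_poweR => //.
- by rewrite in_itv /= x0 leey.
- by rewrite in_itv /= (le_trans x0 xy) leey.
Qed.
End aux.

Section gh.
Context d (T : measurableType d) (R : realType).
Variable mu : {measure set T -> \bar R}.
Hypothesis muT : (mu [set: T] = 1)%E.
Local Open Scope ereal_scope.
Local Notation "'N_ p [ f ]" := (Lnorm mu p (EFin \o f)).


Lemma Lnorm_cst (c : R) (r : R) : (0 < r)%R -> 'N_r%:E[cst c] = `|c|%:E.
Proof.
move=> r0; rewrite unlock /= integral_cst//. rewrite muT mule1 poweR_EFin -powRrM mulfV ?gt_eqF//.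
by rewrite powRr1.
Qed.

Lemma GH_fin (f g : T -> R) (r a b : R) :
  measurable_fun setT f -> measurable_fun setT g ->
  (0 < r)%R -> (0 < a)%R -> (0 < b)%R -> (a^-1 + b^-1 = r^-1)%R ->
  'N_r%:E[(f \* g)%R] <= 'N_a%:E[f] * 'N_b%:E[g].
Proof.
move=> mf mg r0 a0 b0 hab.
pose P := (a / r)%R; pose Q := (b / r)%R.
pose F := (fun x => `|f x| `^ r)%R; pose G := (fun x => `|g x| `^ r)%R.
have P0 : (0 < P)%R by rewrite divr_gt0.
have Q0 : (0 < Q)%R by rewrite divr_gt0.
have hPQ : (P^-1 + Q^-1 = 1)%R.
  by rewrite !invf_div -mulrDr hab mulfV ?gt_eqF.
have mF : measurable_fun setT F.
  apply: (@measurableT_comp _ _ _ _ _ _ (@powR R ^~ r)) => //.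
  exact: measurableT_comp.
have mG : measurable_fun setT G.
  apply: (@measurableT_comp _ _ _ _ _ _ (@powR R ^~ r)) => //.
  exact: measurableT_comp.
have H := hoelder mu mF mG P0 Q0 hPQ.
have C1 : 'N_1[(F \* G)%R] = 'N_r%:E[(f \* g)%R] `^ r.
  rewrite Lnorm1 poweR_Lnorm ?gt_eqF//; apply: eq_integral => x _ /=.
  congr EFin.
  by rewrite ger0_norm ?mulr_ge0 ?powR_ge0// /F /G -powRM// normrM.
have C2 : forall (h : T -> R) (c : R), (0 < c)%R ->
    'N_(c / r)%:E[(fun x => `|h x| `^ r)%R] = 'N_c%:E[h] `^ r.
  move=> h c c0; rewrite unlock /= -poweRrM; congr poweR.
    apply: eq_integral => x _ /=; congr EFin.
    by rewrite ger0_norm ?powR_ge0// -powRrM mulrCA mulfV ?gt_eqF// mulr1.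
  by rewrite invf_div mulrC.
move: H; rewrite C1 C2// C2// -poweRM ?Lnorm_ge0// => H.
apply: poweR_le_inv H => //; [exact: Lnorm_ge0|].
by rewrite mule_ge0// Lnorm_ge0.
Qed.

Lemma Lnorm_pow (h : T -> R) (r : R) : (r != 0)%R ->
  'N_r%:E[h] `^ r = \int[mu]_x (`|h x| `^ r)%:E.
Proof. by move=> r0; rewrite poweR_Lnorm//. Qed.

Lemma mpow (h : T -> R) (r : R) : measurable_fun setT h ->
  measurable_fun setT (fun x => `|h x| `^ r)%R.
Proof.
move=> mh; apply: (@measurableT_comp _ _ _ _ _ _ (@powR R ^~ r)) => //.
exact: measurableT_comp.
Qed.

Lemma Lnorm_ae0 (h : T -> R) (r : R) : (0 < r)%R -> measurable_fun setT h ->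
  (\forall x \ae mu, h x = 0%R) -> 'N_r%:E[h] = 0.
Proof.
move=> r0 mh hae; apply: (@poweR_eq0_eq0 _ _ r); first exact: Lnorm_ge0.
rewrite Lnorm_pow ?gt_eqF//.
rewrite (ae_eq_integral (cst 0)) => //.
- by rewrite integral0.
- by apply: measurableT_comp => //; exact: mpow.
- apply: filterS hae => x /= -> _.
  by rewrite normr0 powR0 ?gt_eqF.
Qed.

Lemma GH_inf (f g : T -> R) (r : R) :
  measurable_fun setT f -> measurable_fun setT g -> (0 < r)%R ->
  'N_r%:E[(f \* g)%R] <= 'N_+oo[f] * 'N_r%:E[g].
Proof.
move=> mf mg r0.
have mfg : measurable_fun setT (f \* g)%R by exact: measurable_funM.
have NS : 'N_+oo[f] = ess_sup mu (abse \o (EFin \o f)).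
  by rewrite unlock /= muT lte01.
have S0 := Lnorm_ge0 mu +oo (EFin \o f).
have Sge := ess_sup_ge mu (abse \o (EFin \o f)).
rewrite NS in S0 *; move: S0 Sge.
case: (ess_sup mu (abse \o (EFin \o f))) => [s| |]// s0 Sge.
- apply: (@poweR_le_inv _ _ _ r) => //; first exact: Lnorm_ge0.
    by rewrite mule_ge0// Lnorm_ge0.
  rewrite poweRM ?Lnorm_ge0// !Lnorm_pow ?gt_eqF// poweR_EFin.
  rewrite -ge0_integralZl_EFin//; last 2 first.
  + by apply: measurableT_comp => //; exact: mpow.
  + exact: powR_ge0.
  under [X in _ <= X]eq_integral do rewrite -EFinM.
  apply: ae_ge0_le_integral => //.
  + by apply: measurableT_comp => //; exact: mpow.
  + by move=> x _; rewrite lee_fin mulr_ge0 ?powR_ge0.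
  + apply: measurableT_comp => //; apply: measurable_funM => //; exact: mpow.
  apply: filterS Sge => x /= hx _.
  have s0' : (0 <= s)%R by rewrite -lee_fin.
  rewrite lee_fin -powRM//.
  apply: (ge0_ler_powR (ltW r0)).
  + by rewrite nnegrE.
  + by rewrite nnegrE mulr_ge0.
  + by rewrite normrM ler_wpM2r// -lee_fin.
- have [g0|g0] := eqVneq ('N_r%:E[g]) 0.
    rewrite g0 mule0 Lnorm_ae0//.
    have := @Lnorm_eq0_eq0 _ _ _ mu (EFin \o g) r%:E.
    move=> /(_ _ _ g0); rewrite lte_fin => /(_ _ r0).
    move=> H; have {H} : \forall x \ae mu, [set: T] x -> (EFin \o g) x = 0 by apply: H; apply: measurableT_comp.
    apply: filterS => x /= /(_ I) [] ->; by rewrite mulr0.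
  by rewrite gt0_mulye ?leey// lt0e g0 Lnorm_ge0.
Qed.

Lemma GH (f g : T -> R) (r : R) (p q : \bar R) :
  measurable_fun setT f -> measurable_fun setT g -> (0 < r)%R ->
  1 <= p -> 1 <= q -> p^-1 + q^-1 = (r^-1)%:E ->
  'N_r%:E[(f \* g)%R] <= 'N_p[f] * 'N_q[g].
Proof.
move=> mf mg r0.
have swap : 'N_r%:E[(f \* g)%R] = 'N_r%:E[(g \* f)%R].
  by apply: eq_Lnorm => x /=; rewrite mulrC.
case: p => [a| |]// ; case: q => [b| |]//.
- rewrite !lee_fin => a1 b1.
  have a0 : (0 < a)%R by rewrite (lt_le_trans ltr01).
  have b0 : (0 < b)%R by rewrite (lt_le_trans ltr01).
  rewrite !inver !gt_eqF// => -[hab].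
  exact: GH_fin.
- rewrite lee_fin => a1 _.
  have a0 : (0 < a)%R by rewrite (lt_le_trans ltr01).
  rewrite inver gt_eqF// invey adde0 => -[har].
  have -> : a = r by rewrite -[a]invrK har invrK.
  by rewrite swap muleC; exact: GH_inf.
- rewrite lee_fin => _ b1.
  have b0 : (0 < b)%R by rewrite (lt_le_trans ltr01).
  rewrite inver gt_eqF// invey add0e => -[hbr].
  have -> : b = r by rewrite -[b]invrK hbr invrK.
  exact: GH_inf.
- move=> _ _; rewrite invey adde0 => -[] /esym/eqP; rewrite invr_eq0.
  by rewrite gt_eqF.
Qed.

Lemma L1_le (h : T -> R) (r : R) : measurable_fun setT h -> (1 <= r)%R ->
  'N_1[h] <= 'N_r%:E[h].
Proof.
move=> mh r1; have [->|r1'] := eqVneq r 1%R; first by [].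
have r1'' : (1 < r)%R by rewrite lt_neqAle eq_sym r1' r1.
have r0 : (0 < r)%R by rewrite (lt_trans ltr01).
pose r' := ((1 - r^-1)^-1)%R.
have r'0 : (0 < r')%R by rewrite invr_gt0 subr_gt0 invf_lt1.
have hrr : (r^-1 + r'^-1 = 1)%R by rewrite invrK addrC subrK.
have := hoelder mu mh (measurable_cst (1%R : R)) r0 r'0 hrr.
rewrite Lnorm_cst1 muT poweR1r mule1.
by under eq_Lnorm do rewrite /= mulr1.
Qed.
End gh.

Theorem lemma2 (R : realType)
  (dZ dO dX dE : measure_display)
  (Z : measurableType dZ) (Omega : measurableType dO)
  (X : measurableType dX) (Eps : measurableType dE)
  (mu : probability Z R) (P : probability Omega R)
  (y : Z -> X -> Eps -> R) (x : Omega -> X) (eps : Omega -> Eps)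
  (M : set (Z * Omega -> R)) (theta : (Z * Omega -> R) -> R)
  (psi : Z * Omega -> R) :
  let m := (mu \x P)%E in
  let yt := fun zw : Z * Omega => y zw.1 (x zw.2) (eps zw.2) in
  let thetahat := fun zw : Z * Omega => yt zw * psi zw in
  measurable_fun setT (fun t : Z * (X * Eps) => y t.1 t.2.1 t.2.2) ->
  measurable_fun setT x -> measurable_fun setT eps ->
  closed_L2_subspace m M ->
  M yt ->
  continuous_linear_on m M theta ->
  riesz_representer m M theta psi ->
  (forall (r : nat) (p q : \bar R),
      (1 <= r)%N -> (1 <= p)%E -> (1 <= q)%E ->
      (p^-1 + q^-1 = (r%:R^-1)%:E)%E ->
      m.-integrable setT (fun zw => (`|thetahat zw - theta yt| ^+ r)%:E) ->
      (\int[m]_zw (`|thetahat zw - theta yt| ^+ r)%:E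
         <= (2%:E * Lnorm m p (EFin \o yt) * Lnorm m q (EFin \o psi)) ^+ r)%E) /\
  (forall (p q : \bar R),
      (1 <= p)%E -> (1 <= q)%E ->
      (p^-1 + q^-1 = (2^-1)%:E)%E ->
      m.-integrable setT (fun zw => ((thetahat zw - theta yt) ^+ 2)%:E) ->
      (\int[m]_zw ((thetahat zw - theta yt) ^+ 2)%:E
         <= (Lnorm m p (EFin \o yt)) ^+ 2 * (Lnorm m q (EFin \o psi)) ^+ 2)%E).

Proof.
move=> m yt thetahat myf mx meps [hsub _ _ _] Myt _ [Mpsi hriesz].
have mT : m [set: Z * Omega] = 1%E by apply: probability_setT.
have [myt yt2] := hsub _ Myt.
have [mpsi psi2] := hsub _ Mpsi.
set c := theta yt.
have hc : c%:E = (\int[m]_t (thetahat t)%:E)%E by rewrite /c hriesz.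
have mth : measurable_fun setT thetahat by exact: measurable_funM.
have hth : thetahat = (yt \* psi)%R by [].
split.
- move=> r p q r1 p1 q1 hpq _.
  have r0 : (0 < r%:R :> R)%R by rewrite ltr0n.
  have hK := @GH _ _ _ m mT yt psi _ p q myt mpsi r0 p1 q1 hpq.
  rewrite -hth in hK.
  set K := (Lnorm m p (EFin \o yt) * Lnorm m q (EFin \o psi))%E in hK *.
  have K0 : (0 <= K)%E by rewrite mule_ge0// Lnorm_ge0.
  have hcK : (`|c|%:E <= K)%E.
    apply: le_trans hK; rewrite -abse_EFin hc.
    apply: le_trans (le_abse_integral _ _ _) _ => //.
      exact: measurableT_comp.
    rewrite -Lnorm1; apply: (@L1_le _ _ _ m mT) => //.
    by rewrite (_ : 1%R = 1%:R)// ler_nat.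
  have hmk : (Lnorm m (r%:R)%:E (EFin \o (fun zw => thetahat zw - c)%R) <= 2%:E * K)%E.
    have -> : (EFin \o (fun zw => thetahat zw - c)%R) = (EFin \o (thetahat \+ cst (- c))%R) by [].
    apply: le_trans (eminkowski _ _ _ _) _ => //.
      by rewrite lee_fin (_ : 1%R = 1%:R)// ler_nat.
    rewrite (@Lnorm_cst _ _ _ m mT)// normrN mule_natl mule2n.
    by apply: leeD.
  rewrite -muleA -/K (@expe_poweR R _ r); last by rewrite mule_ge0.
  under eq_integral do rewrite -powR_mulrn//.
  rewrite -Lnorm_pow ?gt_eqF//.
  apply: poweR_le => //; first exact: Lnorm_ge0.
- move=> p q p1 q1 hpq hint.
  have two0 : (0 < 2 :> R)%R by [].
  have hK := @GH _ _ _ m mT yt psi 2 p q myt mpsi two0 p1 q1 hpq.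
  rewrite -hth in hK.
  set K := (Lnorm m p (EFin \o yt) * Lnorm m q (EFin \o psi))%E in hK *.
  have K0 : (0 <= K)%E by rewrite mule_ge0// Lnorm_ge0.
  have h22 : ((2:R)^-1 + (2:R)^-1 = 1)%R by rewrite [RHS](splitr 1) div1r.
  have ith : m.-integrable setT (EFin \o thetahat).
    apply/integrableP; split; first exact: measurableT_comp.
    have := hoelder m myt mpsi two0 two0 h22.
    rewrite Lnorm1 => H; apply: le_lt_trans H _.
    apply: lte_mul_pinfty => //; first exact: Lnorm_ge0.
    by rewrite ge0_fin_numE// Lnorm_ge0.
  have icst : m.-integrable setT (EFin \o cst (c ^+ 2)%R).
    apply/integrableP; split; first exact: measurableT_comp.
    rewrite /= (_ : (\int[m]__ `|c ^+ 2|%:E)%E = (`|c ^+ 2|%:E * m setT)%E); last exact: integral_cst.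
    by rewrite mT mule1 ltry.
  have i2 : m.-integrable setT (EFin \o (fun zw => 2 * c * thetahat zw - c ^+ 2)%R).
    have := integrableB measurableT (integrableZl measurableT (2 * c)%R ith) icst.
    by apply: eq_integrable => // zw _ /=; rewrite EFinB EFinM.
  have E : (\int[m]_zw ((thetahat zw) ^+ 2)%:E
       = \int[m]_zw ((thetahat zw - c) ^+ 2)%:E + (c ^+ 2)%:E)%E.
    transitivity (\int[m]_zw ((EFin \o (fun zw => (thetahat zw - c) ^+ 2)%R) \+
       (EFin \o (fun zw => 2 * c * thetahat zw - c ^+ 2)%R)) zw)%E.
      apply: eq_integral => zw _ /=; rewrite -EFinD; congr EFin.
      by rewrite sqrrB; ring.
    rewrite integralD_EFin//.
    congr (_ + _)%E.
    rewrite (eq_integral (fun zw => (2 * c)%:E * (thetahat zw)%:E - (c ^+ 2)%:E)%E); last first.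
      by move=> zw _ /=; rewrite EFinB EFinM.
    have i3 : m.-integrable setT (EFin \o (fun zw => 2 * c * thetahat zw)%R).
      have := integrableZl measurableT (2 * c)%R ith.
      by apply: eq_integrable => // zw _ /=; rewrite EFinM.
    rewrite integralB_EFin//.
    under eq_integral do rewrite EFinM.
    rewrite integralZl//.
    rewrite (_ : (\int[m]__ (c ^+ 2)%:E)%E = ((c ^+ 2)%:E * m setT)%E); last exact: integral_cst.
    rewrite mT mule1 -hc -EFinM -EFinB.
    by congr EFin; ring.
  have hc2 : (0 <= (c ^+ 2)%:E)%E by rewrite lee_fin sqr_ge0.
  apply: le_trans (leeDl _ hc2) _.
  rewrite -E.
  have -> : (\int[m]_zw ((thetahat zw) ^+ 2)%:E = Lnorm m 2%:E (EFin \o thetahat) `^ 2)%E.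
    rewrite Lnorm_pow//; apply: eq_integral => zw _.
    by rewrite -[2%R]/(2%:R) powR_mulrn// -normrX ger0_norm// sqr_ge0.
  rewrite (@expe_poweR R _ 2) ?Lnorm_ge0// (@expe_poweR R _ 2) ?Lnorm_ge0//.
  rewrite -poweRM ?Lnorm_ge0// -/K.
  apply: poweR_le => //; exact: Lnorm_ge0.
Qed.
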